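(* Let $q$ be a prime power and let $C\subseteq \mathrm{GF}(q^m)^n$ be a (linear or nonlinear) code containing the all-zero vector, with $n\le m$, $|C|=q^{mk}$ for an integer $1\le k\le n$, and minimum rank distance $d_{\mathrm R}=n-k+1$. Let $r=n-k$ and $t=\lfloor (d_{\mathrm R}-1)/2\rfloor$. For an integer $u$ with $d_{\mathrm R}-t\le u<d_{\mathrm R}$, let $D_u$ be the number of vectors $\mathbf y\in\mathrm{GF}(q^m)^n$ of rank $u$ for which there is a codeword $\mathbf c\in C$ with $\mathrm{rk}(\mathbf y-\mathbf c)\le t$. Then $$D_u<\frac{q^2}{q^2-1}{n\brack u}(q^m-1)^{u-r}V_t,$$ where $V_t=\sum_{i=0}^{t}N_i$.
   Context: $A(m,0)=1$ and $A(m,u)=\prod_{i=0}^{u-1}(q^m-q^i)$ for $u\ge1$; ${n\brack u}=A(n,u)/A(u,u)$ is the Gaussian binomial. For $\mathbf x=(x_0,\dots,x_{n-1})\in\mathrm{GF}(q^m)^n$, $\mathrm{rk}(\mathbf x)$ is the dimension over $\mathrm{GF}(q)$ of the $\mathrm{GF}(q)$-span of its coordinates (equivalently the rank of the $m\times n$ expansion matrix over $\mathrm{GF}(q)$). $N_i={n\brack i}A(m,i)$ is the number of vectors of rank $i$ in $\mathrm{GF}(q^m)^n$. The minimum rank distance of $C$ is the minimum of $\mathrm{rk}(\mathbf c-\mathbf d)$ over distinct codewords. *)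

(* Defs.v *)
From HB Require Import structures.
From mathcomp Require Import all_boot all_order all_algebra all_field.
Set Implicit Arguments. Unset Strict Implicit. Unset Printing Implicit Defensive.
Import GRing.Theory Num.Theory.
Local Open Scope ring_scope.

(* GF(q) is a finite field F; GF(q^m) is a finite field extension L of F,
   viewed as a finite type via [finvect_type]. q = #|F|, m = \dim_F L. *)
Definition ext (F : finFieldType) (L : fieldExtType F) := finvect_type L.

Definition qq (F : finFieldType) : nat := #|F|.
Definition mm (F : finFieldType) (L : fieldExtType F) : nat := \dim {:L}.

Definition rk (F : finFieldType) (L : fieldExtType F) (n : nat)
  (x : 'rV[ext L]_n) : nat :=
  \dim (<< [seq (x ord0 i : L) | i <- enum 'I_n] >>%VS).

Definition min_rank_dist (F : finFieldType) (L : fieldExtType F) (n : nat)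
  (C : {set 'rV[ext L]_n}) (d : nat) : Prop :=
  (exists c, exists e, [/\ c \in C, e \in C, c != e & rk (c - e) = d]) /\
  (forall c e, c \in C -> e \in C -> c != e -> (d <= rk (c - e))%N).

Definition Aq (q m u : nat) : rat := \prod_(i < u) ((q%:R) ^+ m - (q%:R) ^+ i).
Definition gauss (q n u : nat) : rat := Aq q n u / Aq q u u.
Definition Nrank (q m n i : nat) : rat := gauss q n i * Aq q m i.
Definition Vball (q m n t : nat) : rat := \sum_(i < t.+1) Nrank q m n i.

Definition Dcount (F : finFieldType) (L : fieldExtType F) (n : nat)
  (C : {set 'rV[ext L]_n}) (t u : nat) : nat :=
  #|[set y : 'rV[ext L]_n | (rk y == u) && [exists c in C, (rk (y - c) <= t)%N]]|.

(* Main.v *)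
Require Import Defs.
From HB Require Import structures.
From mathcomp Require Import all_boot all_order all_algebra all_field.
From mathcomp Require Import ring lra zify.
Import Order.TTheory GRing.Theory Num.Theory.
Import VectorInternalTheory.
Local Open Scope ring_scope.
Lemma inj_leq (T T' : finType) (A : {pred T}) (B : {pred T'}) (f : T -> T') :
  {in A &, injective f} -> (forall x, x \in A -> f x \in B) -> (#|A| <= #|B|)%N.
Proof.
move=> inj fAB; rewrite -(card_in_imset inj); apply: subset_leq_card.
by apply/subsetP => _ /imsetP[x xA ->]; apply: fAB.
Qed.

Lemma fiber_lb (T T' : finType) (A : {pred T}) (B : {pred T'}) (f : T -> T') k :
  (forall y, y \in B -> k <= #|[pred x in A | f x == y]|)%N -> (#|B| * k <= #|A|)%N.
Proof.
move=> H; rewrite -[#|A|]sum1_card (partition_big f predT) //=.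
rewrite (bigID (mem B)) /=; apply: leq_trans (leq_addr _ _).
rewrite -sum_nat_const; apply: leq_sum => y yB.
by rewrite sum1_card; apply: leq_trans (H y yB) _; apply: subset_leq_card; apply/subsetP.
Qed.

Lemma fiber_ub (T T' : finType) (A : {pred T}) (B : {pred T'}) (f : T -> T') c K :
  (forall x, x \in A -> f x \in B) ->
  (forall y, y \in B -> #|[pred x in A | f x == y]| * c <= K)%N -> (#|A| * c <= #|B| * K)%N.
Proof.
move=> fAB H; rewrite -[#|A|]sum1_card (partition_big f (mem B)) //= big_distrl /=.
rewrite -sum_nat_const; apply: leq_sum => y yB.
apply: leq_trans (H y yB); rewrite leq_mul2r sum1_card; apply/orP; right.
by apply: subset_leq_card; apply/subsetP.
Qed.
Section CardFr.
Variable F : finFieldType.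
Lemma card_fr m n : (m <= n)%N ->
  #|[pred A : 'M[F]_(m, n) | \rank A == m]| = (\prod_(i < m) (#|F| ^ n - #|F| ^ i))%N.
Proof.
set p := #|F|; pose fr m := [pred A : 'M[F]_(m, n) | \rank A == m].
rewrite -/(fr m).
elim: m => [_ | m IHm /ltnW-le_mn].
  rewrite big_ord0 (@eq_card1 _ (0 : 'M_(0, n))) //= => A.
  by rewrite flatmx0 !inE mxrank.unlock !eqxx.
rewrite big_ord_recr /= -{}IHm //.
rewrite -sum_nat_const /= -sum1_card -add1n.
rewrite (partition_big dsubmx (fr m)) /= => [|A]; last first.
  rewrite !inE -{1}(vsubmxK A); move: {A}(_ A) (_ A) => Ad Au Afull.
  rewrite eqn_leq rank_leq_row -(leq_add2l (\rank Au)) -mxrank_sum_cap.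
  rewrite {1 3}[@mxrank]lock addsmxE (eqnP Afull) -lock -addnA.
  by rewrite leq_add ?rank_leq_row ?leq_addr.
apply: eq_bigr => A rAm; rewrite (reindex (col_mx^~ A)) /=; last first.
  exists usubmx => [v _ | vA]; first by rewrite col_mxKu.
  by case/andP=> _ /eqP <-; rewrite vsubmxK.
transitivity #|~: [set v *m A | v in 'rV_m]|; last first.
  rewrite cardsCs setCK card_imset ?card_mx ?card_ord ?mul1n //.
  have [B AB1] := row_freeP rAm; apply: can_inj (mulmx^~ B) _ => v.
  by rewrite -mulmxA AB1 mulmx1.
rewrite -sum1_card; apply: eq_bigl => v; rewrite !inE col_mxKd eqxx.
rewrite andbT eqn_leq rank_leq_row /= -(leq_add2r (\rank (v :&: A)%MS)).
rewrite -addsmxE mxrank_sum_cap (eqnP rAm) addnAC leq_add2r.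
rewrite (ltn_leqif (mxrank_leqif_sup _)) ?capmxSl // sub_capmx submx_refl.
by congr (~~ _); apply/submxP/imsetP=> [] [u]; exists u.
Qed.
End CardFr.
Section Dec.
Variable F : finFieldType.
Lemma decomp_count n m k (y : 'M[F]_(n,m)) : \rank y = k ->
  (#|[pred g : 'M[F]_(k,k) | \rank g == k]| <=
   #|[pred PQ : 'M[F]_(n,k) * 'M[F]_(k,m) | row_full PQ.1 && (PQ.1 *m PQ.2 == y)]|)%N.
Proof.
move=> <-; have [B BP] := row_fullP (col_base_full y).
apply: (@inj_leq _ _ _ _ (fun g => (col_base y *m g, invmx g *m row_base y))).
  move=> g1 g2 _ _ [] /(congr1 (mulmx B)).
  by rewrite mulmxA BP mul1mx mulmxA BP mul1mx.
move=> g; rewrite !inE /= => rg.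
have gu : g \in unitmx by rewrite -row_free_unit.
rewrite /row_full mxrankMfree ?(eqnP (col_base_full y)) //=.
by rewrite eqxx /= -mulmxA (mulmxA g) mulmxV // mul1mx mulmx_base.
Qed.
End Dec.
Section Core.
Variable F : finFieldType.

Lemma pid_colmx0 n m r N' rho (V : 'M[F]_(r, m)) :
  (r <= rho)%N -> (rho <= n)%N ->
  (pid_mx rho : 'M[F]_(n, r + N')) *m col_mx V 0 = 0 -> V = 0.
Proof.
move=> hr hn /matrixP H; apply/matrixP => l k.
have ln : (l < n)%N by apply: leq_trans (ltn_ord l) (leq_trans hr hn).
have := H (Ordinal ln) k; rewrite /pid_mx !mxE (bigD1 (lshift N' l)) //= big1.
  rewrite [X in X * _]mxE col_mxEu /= eqxx (leq_trans (ltn_ord l) hr) mul1r addr0 => ->.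
  by rewrite ?mxE.
move=> l' ne; rewrite [X in X * _]mxE /=.
case: eqP => [e|]; last by rewrite mul0r.
by move: ne; rewrite -(inj_eq val_inj) /= -e eqxx.
Qed.

Lemma core n m r N (M : 'M[F]_(n,N)) (S : {pred 'M[F]_(n,m)}) :
  (forall a b, a \in S -> b \in S -> a != b -> (r < \rank (a - b)%R)%N) ->
  (forall a, a \in S -> (r < \rank a)%N) ->
  (#|[pred X : 'M[F]_(N,m) | M *m X \in S]| * #|F| ^ (m * r) <= #|F| ^ (m * N))%N.
Proof.
move=> Sd S0.
case: (ltnP (\rank M) r) => hr.
  rewrite eq_card0 ?mul0n // => X; rewrite !inE; apply/negP => /S0.
  by rewrite ltnNge (leq_trans (mxrankM_maxl _ _) (ltnW hr)).
have hN : (r <= N)%N := leq_trans hr (rank_leq_col M).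
have [N' eN] : exists N', N = (r + N')%N by exists (N - r)%N; rewrite subnKC.
subst N.
rewrite mulnDr expnD mulnC leq_mul2l; apply/orP; right.
set R := row_ebase M.
apply: leq_trans (@inj_leq _ _ _ predT (fun X => dsubmx (R *m X)) _ _) _; first last.
- by rewrite mulnC -(card_mx F N' m).
- by [].
move=> X1 X2; rewrite !inE => S1 S2 eq12.
set D := R *m (X1 - X2).
have dD : dsubmx D = 0.
  apply/matrixP => i k; have := congr1 (fun A : 'M[F]_(N',m) => A i k) eq12.
  by rewrite /D mulmxBr !mxE => ->; rewrite subrr.
have eD : D = col_mx (usubmx D) 0 by rewrite -dD vsubmxK.
have eM : M *m (X1 - X2) = col_ebase M *m pid_mx (\rank M) *m D.
  by rewrite /D mulmxA mulmx_ebase.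
have eMX : M *m X1 = M *m X2.
  apply/eqP; apply: contraT => ne; have := Sd _ _ S1 S2 ne.
  rewrite -mulmxBr eM ltnNge (leq_trans (mxrankM_maxr _ _)) //.
  by rewrite eD rank_col_mx0 rank_leq_row.
have : col_ebase M *m (pid_mx (\rank M) *m D) = 0 by rewrite mulmxA -eM mulmxBr eMX subrr.
move/(congr1 (mulmx (invmx (col_ebase M)))); rewrite mulKmx ?col_ebase_unit // mulmx0.
rewrite eD => /pid_colmx0 V0.
have {V0} : D = 0 by rewrite eD V0 ?rank_leq_row // col_mx0.
move/(congr1 (mulmx (invmx R))); rewrite /D mulKmx ?row_ebase_unit // mulmx0.
by move/eqP; rewrite subr_eq0 => /eqP.
Qed.
End Core.

Lemma geom_sum (x : rat) j : (\sum_(i < j) x ^+ i) * (x - 1) = x ^+ j - 1.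
Proof.
elim: j => [|j IH]; first by rewrite big_ord0 mul0r expr0 subrr.
by rewrite big_ord_recr /= mulrDl IH exprS; ring.
Qed.

Lemma prod_lb {x : rat} {M j : nat} : 1 <= x -> (j <= M)%N ->
  (\prod_(i < j) (x ^+ M - x ^+ i)) * x ^+ M >=
  (x ^+ M) ^+ j * (x ^+ M - \sum_(i < j) x ^+ i).
Proof.
move=> x1; elim: j => [|j IH] jM; first by rewrite !big_ord0 expr0 subr0 !mul1r.
have x0 : 0 <= x by lra.
set Q := x ^+ M.
have hQa : 0 <= Q - x ^+ j by rewrite subr_ge0 ler_weXn2l // ltnW.
rewrite !big_ord_recr /=.
apply: le_trans (_ : (Q ^+ j * (Q - \sum_(i < j) x ^+ i)) * (Q - x ^+ j) <= _).
  rewrite -subr_ge0.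
  have -> : Q ^+ j * (Q - \sum_(i < j) x ^+ i) * (Q - x ^+ j) -
     Q ^+ j.+1 * (Q - (\sum_(i < j) x ^+ i + x ^+ j)) =
     Q ^+ j * (\sum_(i < j) x ^+ i) * x ^+ j by rewrite exprS; ring.
  by rewrite !mulr_ge0 ?exprn_ge0 ?sumr_ge0 // => i _; rewrite exprn_ge0.
by rewrite [X in _ <= X]mulrAC; apply: (ler_wpM2r hQa); exact: IH (ltnW jM).
Qed.

Lemma key (q M j : nat) : (1 < q)%N -> (j + 2 <= M)%N ->
  (q%:R ^+ M : rat) ^+ j <=
   (q%:R ^+ 2 / (q%:R ^+ 2 - 1)) * \prod_(i < j) (q%:R ^+ M - q%:R ^+ i).
Proof.
move=> q1 jM; set x : rat := q%:R.
have x2 : 2 <= x by rewrite /x ler_nat.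
have x1 : 1 <= x by lra.
have hP := prod_lb x1 (leq_trans (leq_addr 2 j) jM).
set P := \prod_(i < j) _ in hP *; set s := \sum_(i < j) _ in hP.
set Q := x ^+ M in hP *.
have sj : s <= x ^+ j.
  have := geom_sum x j; rewrite -/s => e.
  have : s * (x - 1) <= x ^+ j by rewrite e; lra.
  have s0 : 0 <= s by rewrite sumr_ge0 // => i _; rewrite exprn_ge0 //; lra.
  nra.
have xj2 : x ^+ j * x ^+ 2 <= Q by rewrite -exprD /Q ler_weXn2l.
have Q0 : 0 < Q by rewrite exprn_gt0 //; lra.
have d0 : 0 < x ^+ 2 - 1 by rewrite -subr_gt0; nra.
rewrite mulrAC ler_pdivlMr //.
have Qj0 : 0 <= Q ^+ j by rewrite exprn_ge0 // ltW.
have : Q ^+ j * (Q - s) * x ^+ 2 <= P * Q * x ^+ 2 by rewrite ler_wpM2r ?exprn_ge0 //; lra.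
have : Q ^+ j * Q * (x ^+ 2 - 1) <= Q ^+ j * (Q - s) * x ^+ 2.
  rewrite -!mulrA ler_wpM2l //; nra.
move=> h1 h2; have h3 := le_trans h1 h2.
rewrite -(ler_pM2r Q0); have -> : Q ^+ j * (x ^+ 2 - 1) * Q = Q ^+ j * Q * (x ^+ 2 - 1) by ring.
by have -> : x ^+ 2 * P * Q = P * Q * x ^+ 2 by ring.
Qed.

Definition FRq (q a b : nat) := (\prod_(i < a) (q ^ b - q ^ i))%N.

Lemma FRq_gt0 q a b : (1 < q)%N -> (a <= b)%N -> (0 < FRq q a b)%N.
Proof.
move=> q1 ab; rewrite /FRq prodn_gt0 // => i; rewrite subn_gt0 ltn_exp2l //.
exact: leq_trans (ltn_ord i) ab.
Qed.

Lemma AqE q a b : (0 < q)%N -> (a <= b)%N -> Aq q b a = (FRq q a b)%:R.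
Proof.
move=> q0 ab; rewrite /Aq /FRq natr_prod; apply: eq_bigr => i _.
rewrite natrB ?natrX // leq_pexp2l //; exact: ltnW (leq_trans (ltn_ord i) ab).
Qed.

Lemma final_arith (q n m u r t : nat) : (1 < q)%N -> (u <= r)%N -> (u <= n)%N ->
  (t <= n)%N -> (0 < m)%N -> (forall j, (0 < j <= t)%N -> (j + 2 <= m)%N) ->
  \sum_(j < t.+1) ((FRq q u n * FRq q j n * q ^ (m * (u + j)))%:R /
                   (FRq q u u * FRq q j j * q ^ (m * r))%:R : rat)
  < (q%:R ^+ 2 / (q%:R ^+ 2 - 1)) * gauss q n u * ((q%:R ^+ m - 1) ^ (u%:Z - r%:Z))
    * Vball q m n t.
Proof.
move=> q1 ur un tn m0 jm.
have q0 : (0 < q)%N by apply: ltnW.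
have x2 : 2 <= (q%:R : rat) by rewrite ler_nat.
set x : rat := q%:R in x2 *.
set Q := x ^+ m.
have Q1 : 1 < Q.
  rewrite /Q; apply: lt_le_trans (_ : 1 < x) _; first lra.
  by rewrite ler_eXnr //; lra.
set k := x ^+ 2 / (x ^+ 2 - 1).
have k1 : 1 < k.
  rewrite /k ltr_pdivlMr; last by rewrite subr_gt0; nra.
  lra.
set g := fun a => (FRq q a n)%:R / (FRq q a a)%:R : rat.
have gE a : (a <= n)%N -> gauss q n a = g a by move=> an; rewrite /gauss !AqE.
have g0 a : (a <= n)%N -> 0 < g a.
  by move=> an; rewrite /g divr_gt0 // ltr0n FRq_gt0.
set E := ((Q - 1) ^+ (r - u))^-1.
have EE : (Q - 1) ^ (u%:Z - r%:Z) = E.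
  by rewrite -[u%:Z - r%:Z]opprB subzn // -exprnN.
have E0 : 0 < E by rewrite invr_gt0 exprn_gt0 // subr_gt0.
set a := (Q ^+ (r - u))^-1.
have aE : a <= E.
  rewrite lef_pV2 ?posrE ?exprn_gt0 ?subr_gt0 //; last by lra.
  by rewrite lerXn2r ?nnegrE ?subr_ge0 ?ler_wpDr //; lra.
have a0 : 0 < a by rewrite invr_gt0 exprn_gt0 //; lra.
have FR0 b c : (b <= c)%N -> (FRq q b c)%:R != 0 :> rat.
  by move=> bc; rewrite pnatr_eq0 -lt0n FRq_gt0.
have LE (j : 'I_t.+1) : ((FRq q u n * FRq q j n * q ^ (m * (u + j)))%:R /
                   (FRq q u u * FRq q j j * q ^ (m * r))%:R : rat) = g u * g j * (Q ^+ j * a).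
  have jn : (j <= n)%N by apply: leq_trans tn; rewrite -ltnS.
  have eQ : Q ^+ r = Q ^+ u * Q ^+ (r - u) by rewrite -exprD subnKC.
  rewrite !natrM !natrX -/x !exprM -/Q exprD eQ /g /a.
  field; rewrite ?FR0 ?andbT //; apply/and3P; split => //; rewrite expf_neq0 //; lra.
have RE : (k * gauss q n u * (Q - 1) ^ (u%:Z - r%:Z) * Vball q m n t) =
   \sum_(j < t.+1) g u * g j * (k * Aq q m j * E).
  rewrite EE /Vball mulr_sumr; apply: eq_bigr => j _.
  have jn : (j <= n)%N by apply: leq_trans tn; rewrite -ltnS.
  rewrite /Nrank !gE //; ring.
rewrite RE; under eq_bigr do rewrite LE.
rewrite [X in X < _]big_ord_recl [X in _ < X]big_ord_recl.
have gu := g0 u un.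
have gp j : (j <= n)%N -> 0 < g u * g j by move=> jn; exact: mulr_gt0 gu (g0 j jn).
apply: ltr_leD.
  rewrite /= expr0 mul1r /Aq big_ord0 mulr1.
  rewrite ltr_pM2l ?gp //.
  apply: le_lt_trans aE _; rewrite -[X in X < _]mul1r ltr_pM2r //.
apply: ler_sum => j _.
have jn : (lift ord0 j <= n)%N by apply: leq_trans tn; rewrite -ltnS.
rewrite ler_pM2l ?gp //.
apply: ler_pM => //; [by rewrite exprn_ge0 //; lra | by rewrite ltW |].
apply: key => //; apply: jm; rewrite /= -ltnS; exact: ltn_ord.
Qed.

Section Bridge.
Variables (F : finFieldType) (L : fieldExtType F).
Definition phi {n} (x : 'rV[ext L]_n) : 'M[F]_(n, dim L) :=
  \matrix_(i < n) v2r (x ord0 i : L).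

Lemma phiB n (a b : 'rV[ext L]_n) : phi (a - b) = phi a - phi b.
Proof. apply/matrixP => i k; rewrite !mxE; change (v2r ((a ord0 i : L) - (b ord0 i : L)) 0 k = v2r (a ord0 i : L) 0 k - v2r (b ord0 i : L) 0 k); rewrite linearB. by rewrite !mxE. Qed.

Lemma phi_inj n : injective (@phi n).
Proof.
move=> a b /matrixP e; apply/matrixP => i j; rewrite [i]ord1.
apply: v2r_inj; apply/rowP => k; have := e j k; by rewrite !mxE.
Qed.

Lemma rk_phi n (x : 'rV[ext L]_n) : rk x = \rank (phi x).
Proof.
rewrite /rk /dimv [span]unlock /span_expanded_def mx2vsK.
set X := [seq _ | _ <- _].
have sX : size X = n by rewrite size_map size_enum_ord.
have nthX j (hj : (j < n)%N) : nth 0 X j = x ord0 (Ordinal hj).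
  by rewrite (nth_map (Ordinal hj)) ?size_enum_ord // -[j]/(nat_of_ord (Ordinal hj)) nth_ord_enum.
apply/eqmx_rank/andP; split; apply/row_subP => i.
  have hi : (i < n)%N by rewrite -sX.
  rewrite rowK (tnth_nth 0) /= nthX.
  suff -> : v2r (x ord0 (Ordinal hi) : L) = row (Ordinal hi) (phi x) by exact: row_sub.
  by rewrite rowK.
have hi : (i < size X)%N by rewrite sX.
rewrite rowK.
suff -> : v2r (x ord0 i : L) = row (Ordinal hi) (b2mx (in_tuple X)) by exact: row_sub.
by rewrite rowK /= (tnth_nth 0) /= nthX; congr (v2r (x _ _)); apply: val_inj.
Qed.
End Bridge.

Section Main.
Variables (F : finFieldType) (n m u r t : nat) (Cm : {pred 'M[F]_(n,m)}).
Hypothesis Cd : forall a b, a \in Cm -> b \in Cm -> a != b -> (r < \rank (a - b)%R)%N.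
Hypothesis C0 : 0 \in Cm.
Hypothesis tu : (t < u)%N.
Hypothesis un : (u <= n)%N.
Hypothesis tn : (t <= n)%N.

Definition FR a b := FRq #|F| a b.
Definition Ym := [pred y : 'M[F]_(n,m) | (\rank y == u) &&
   [exists c, (c \in Cm) && (\rank (y - c)%R <= t)%N]].
Definition W := [pred PQ : 'M[F]_(n,u) * 'M[F]_(u,m) | row_full PQ.1 && (PQ.1 *m PQ.2 \in Ym)].
Definition Wj j := [pred PQ : 'M[F]_(n,u) * 'M[F]_(u,m) | row_full PQ.1 &&
   [exists c, [&& c \in Cm, c != 0 & \rank (PQ.1 *m PQ.2 - c)%R == j]]].
Definition Tj j := [pred X : ('M[F]_(n,u) * 'M[F]_(n,j)) * ('M[F]_(u,m) * 'M[F]_(j,m)) |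
   [&& row_full X.1.1, row_full X.1.2, (X.1.1 *m X.2.1 - X.1.2 *m X.2.2) \in Cm &
       (X.1.1 *m X.2.1 - X.1.2 *m X.2.2) != 0]].

Lemma stepA : (#|Ym| * FR u u <= #|W|)%N.
Proof.
apply: (@fiber_lb _ _ _ _ (fun PQ => PQ.1 *m PQ.2)) => y yY.
rewrite /FR /FRq -card_fr //.
have ry : \rank y = u by move: yY; rewrite inE => /andP[/eqP].
apply: leq_trans (decomp_count _ _ _ _ _ ry) _; apply: subset_leq_card; apply/subsetP => x.
move: yY; rewrite !inE => yY /andP[-> /eqP e]; by rewrite e eqxx andbT.
Qed.

Lemma stepB : (#|W| <= \sum_(j < t.+1) #|Wj j|)%N.
Proof.
apply: leq_trans (_ : _ <= \sum_(x in W) \sum_(j < t.+1) (x \in Wj j : nat))%N _.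
  rewrite -sum1_card; apply: leq_sum => x; rewrite inE => /andP[rf].
  rewrite inE => /andP[/eqP ru /existsP[c /andP[cC ct]]].
  have c0 : c != 0.
    apply: contraTneq ct => ->; rewrite subr0 ru -ltnNge //.
  have hj : (\rank (x.1 *m x.2 - c)%R < t.+1)%N by [].
  rewrite (bigD1 (Ordinal hj)) //=; apply: leq_trans (leq_addr _ _).
  by rewrite inE rf /=; rewrite lt0b; apply/existsP; exists c; rewrite cC c0 eqxx.
rewrite exchange_big /=; apply: leq_sum => j _.
rewrite -sum1_card big_mkcond [X in (_ <= X)%N]big_mkcond /=.
by apply: leq_sum => x _; case: (x \in W); case: (x \in Wj j).
Qed.

Lemma stepC j : (j <= n)%N -> (#|Wj j| * FR j j <= #|Tj j|)%N.
Proof.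
move=> jn.
apply: (@fiber_lb _ _ _ _ (fun X => (X.1.1, X.2.1))) => [[P Q]].
rewrite inE /= => /andP[rf /existsP[c /and3P[cC c0 /eqP rc]]].
rewrite /FR /FRq -card_fr //.
apply: leq_trans (decomp_count _ _ _ _ _ rc) _.
apply: (@inj_leq _ _ _ _ (fun AB => ((P, AB.1), (Q, AB.2)))).
  by move=> [A1 B1] [A2 B2] _ _ [-> ->].
move=> [A B]; rewrite !inE /= => /andP[ra /eqP ->].
by rewrite rf ra subKr cC c0 !eqxx.
Qed.

Definition Sm := [pred c : 'M[F]_(n,m) | (c \in Cm) && (c != 0)].

Lemma stepD j : (j <= n)%N ->
  (#|Tj j| * #|F| ^ (m * r) <= FR u n * FR j n * #|F| ^ (m * (u + j)))%N.
Proof.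
move=> jn.
apply: leq_trans (@fiber_ub _ _ _
   [pred PA : 'M[F]_(n,u) * 'M[F]_(n,j) | row_full PA.1 && row_full PA.2]
   (fun X => X.1) _ _ _ _) _.
- by move=> [[P A] [Q B]]; rewrite !inE /= => /and4P[-> -> _ _].
- move=> [P A] _.
  apply: leq_trans (_ : _ <= #|[pred Z : 'M[F]_(u + j, m) | row_mx P (- A) *m Z \in Sm]|
     * #|F| ^ (m * r))%N _; last first.
    apply: core.
      by move=> a b; rewrite !inE => /andP[aC _] /andP[bC _]; apply: Cd.
    move=> a; rewrite !inE => /andP[aC a0].
    by have := Cd _ _ aC C0 a0; rewrite subr0.
  rewrite leq_mul2r; apply/orP; right.
  apply: (@inj_leq _ _ _ _ (fun X => col_mx X.2.1 X.2.2)).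
    move=> [[P1 A1] [Q1 B1]] [[P2 A2] [Q2 B2]]; rewrite !inE /=.
    move=> /andP[_ /eqP [-> ->]] /andP[_ /eqP [-> ->]] /eq_col_mx [-> ->] //.
  move=> [[P1 A1] [Q1 B1]]; rewrite !inE /= => /andP[/and4P[_ _ cC c0] /eqP [e1 e2]]; subst P1 A1.
  by rewrite mul_row_col mulNmx cC c0.
- rewrite leq_mul2r; apply/orP; right.
  have -> : #|[pred PA : 'M[F]_(n,u) * 'M[F]_(n,j) | row_full PA.1 && row_full PA.2]|
     = #|setX [set P : 'M[F]_(n,u) | row_full P] [set A : 'M[F]_(n,j) | row_full A]|.
    by apply: eq_card => [[P A]]; rewrite in_setX !inE.
  rewrite cardsX; apply: leq_mul.
    rewrite /FR /FRq -card_fr //; apply: (@inj_leq _ _ _ _ trmx); first by move=> ? ? _ _; apply: trmx_inj.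
    by move=> P; rewrite !inE mxrank_tr.
  rewrite /FR /FRq -card_fr //; apply: (@inj_leq _ _ _ _ trmx); first by move=> ? ? _ _; apply: trmx_inj.
  by move=> P; rewrite !inE mxrank_tr.
Qed.

Lemma FR_gt0 a b : (a <= b)%N -> (0 < FR a b)%N.
Proof.
move=> ab; rewrite /FR /FRq prodn_gt0 // => i; rewrite subn_gt0 ltn_exp2l.
  exact: leq_trans (ltn_ord i) ab.
exact: card_finNzRing_gt1.
Qed.

Lemma count_rat : (#|Ym|%:R : rat) <= \sum_(j < t.+1)
   ((FR u n * FR j n * #|F| ^ (m * (u + j)))%:R / (FR u u * FR j j * #|F| ^ (m * r))%:R).
Proof.
have q0 : (0 < #|F|)%N by apply: ltnW; exact: card_finNzRing_gt1.
have hW (j : 'I_t.+1) : (#|Wj j|%:R : rat) <=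
    (FR u n * FR j n * #|F| ^ (m * (u + j)))%:R / (FR j j * #|F| ^ (m * r))%:R.
  have jn : (j <= n)%N by apply: leq_trans tn; rewrite -ltnS.
  rewrite ler_pdivlMr ?ltr0n ?muln_gt0 ?FR_gt0 ?expn_gt0 ?q0 // -natrM ler_nat mulnA.
  apply: leq_trans _ (stepD _ jn); rewrite leq_mul2r; apply/orP; right; exact: stepC.
have e j : ((FR u n * FR j n * #|F| ^ (m * (u + j)))%:R / (FR u u * FR j j * #|F| ^ (m * r))%:R : rat)
   = ((FR u n * FR j n * #|F| ^ (m * (u + j)))%:R / (FR j j * #|F| ^ (m * r))%:R) / (FR u u)%:R.
  rewrite !natrM; field; rewrite ?pnatr_eq0 -?lt0n ?FR_gt0 ?expn_gt0 ?q0 //.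
under eq_bigr do rewrite e.
rewrite -mulr_suml ler_pdivlMr ?ltr0n ?FR_gt0 //.
apply: le_trans (_ : (#|W|%:R : rat) <= _).
  by rewrite -natrM ler_nat; exact: stepA.
apply: le_trans (_ : (\sum_(j < t.+1) #|Wj j| : nat)%:R <= _).
  by rewrite ler_nat; exact: stepB.
by rewrite natr_sum; apply: ler_sum => j _; exact: hW.
Qed.
End Main.

Theorem proposition4 (F : finFieldType) (L : fieldExtType F) (n k u : nat)
  (C : {set 'rV[ext L]_n}) :
  0 \in C ->
  (n <= mm L)%N ->
  (1 <= k <= n)%N ->
  #|C| = (qq F ^ (mm L * k))%N ->
  min_rank_dist C (n - k + 1) ->
  let d := (n - k + 1)%N in
  let r := (n - k)%N in
  let t := (d.-1)./2 in
  (d - t <= u < d)%N ->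
  (Dcount C t u)%:R <
    ((qq F)%:R ^+ 2 / ((qq F)%:R ^+ 2 - 1)) * gauss (qq F) n u
    * (((qq F)%:R ^+ (mm L) - 1) ^ (u%:Z - r%:Z))
    * Vball (qq F) (mm L) n t :> rat.
Proof.
move=> C0 nm /andP[k1 kn] _ [_ hmin] d r t /andP[hu1 hu2].
have q1 : (1 < qq F)%N := card_finNzRing_gt1 F.
set m0 := dim L.
have mmE : mm L = m0 by rewrite /mm dimvf.
rewrite mmE; rewrite mmE in nm.
have dE : d = r.+1 by rewrite /d /r addn1.
have t2 : (t.*2 <= r)%N by rewrite /t dE /= -{2}(odd_double_half r) leq_addl.
rewrite -muln2 in t2.
have rE : r = (n - k)%N by [].
rewrite dE in hu1 hu2.
have ur : (u <= r)%N by [].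
have tu : (t < u)%N by lia.
have un : (u <= n)%N by lia.
have tn : (t <= n)%N by lia.
pose Cm := [pred M : 'M[F]_(n, m0) | [exists c, (c \in C) && (phi F L c == M)]].
have Cd : forall a b, a \in Cm -> b \in Cm -> a != b -> (r < \rank (a - b)%R)%N.
  move=> a b /existsP[c /andP[cC /eqP <-]] /existsP[e /andP[eC /eqP <-]] ne.
  have ce : c != e by apply: contraNneq ne => ->.
  by rewrite -phiB -rk_phi; have := hmin c e cC eC ce; rewrite addn1.
have C0' : 0 \in Cm.
  apply/existsP; exists 0; rewrite C0 /=.
  by have := phiB F L n 0 0; rewrite !subrr => ->.
have Dle : (Dcount C t u <= #|Ym F n m0 u t Cm|)%N.
  rewrite /Dcount; apply: (@inj_leq _ _ _ _ (phi F L)).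
    by move=> ? ? _ _; apply: phi_inj.
  move=> y; rewrite inE => /andP[/eqP ry /existsP[c /andP[cC ct]]].
  rewrite inE -rk_phi ry eqxx /=; apply/existsP; exists (phi F L c).
  rewrite -phiB -rk_phi ct andbT; apply/existsP; exists c; by rewrite cC eqxx.
apply: le_lt_trans (_ : (Dcount C t u)%:R <= (#|Ym F n m0 u t Cm|)%:R :> rat) _.
  by rewrite ler_nat.
apply: le_lt_trans (count_rat F n m0 u r t Cm Cd C0' tu un tn) _.
rewrite /FR /qq; apply: final_arith => //; try lia.
Qed.
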